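(* Let $L_B$ be the weighted Laplacian of a connected undirected graph on $N$ nodes with positive edge weights, with eigenvalues $0=\lambda_1^B<\lambda_2^B\le\cdots\le\lambda_N^B$. Let $k_P,\tau_P,k_Q,\tau_Q>0$, $\bar b\ge 0$, $c_Q=1+2k_Q\bar b$, and $\alpha>0$. Consider the linear time-invariant system $H$ with state $\psi=(\delta,\omega,V)\in\mathbb{R}^{3N}$, input $\mathrm{w}\in\mathbb{R}^{2N}$ and output $y\in\mathbb{R}^{2N}$: $$\dot\psi=\begin{bmatrix}0 & I & 0\\ -\frac{k_P}{\tau_P}L_B & -\frac{1}{\tau_P}I & 0\\ 0 & 0 & -\frac{c_Q}{\tau_Q}I-\frac{k_Q}{\tau_Q}L_B\end{bmatrix}\psi+\begin{bmatrix}0&0\\ \frac{1}{\tau_P}I & 0\\ 0 & \frac{1}{\tau_Q}I\end{bmatrix}\mathrm{w},\qquad y=\begin{bmatrix}\sqrt{\alpha}L_B^{1/2} & 0 & 0\\ 0&0&\sqrt{\alpha}L_B^{1/2}\end{bmatrix}\psi .$$ Then the squared $\mathcal{H}_2$ norm of $H$ is $$\|H\|_2^2=\frac{\alpha}{2k_P}(N-1)+\frac{\alpha}{2\tau_Q}\sum_{n=2}^N\frac{1}{\frac{c_Q}{\lambda_n^B}+k_Q}.$$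
   Context: $I$ is the $N\times N$ identity and $L_B^{1/2}$ is the unique positive semidefinite square root of $L_B$. The system matrix has a single zero eigenvalue (mode $\delta\propto\mathbf{1}$), which is unobservable from $y$; all other modes are stable, so the $\mathcal{H}_2$ norm of the transfer function $C(sI-A)^{-1}B$ is finite; $\|H\|_2^2$ equals the steady-state output variance $\lim_{t\to\infty}\mathbb{E}[y^*(t)y(t)]$ under unit-covariance white noise input. Interpretation: $y^*y=\delta^TL_G\delta+V^TL_GV$ with $L_G=\alpha L_B$ the conductance Laplacian (uniform resistance-to-reactance ratio $\alpha$), approximating instantaneous transient power losses. *)

(* Defs.v *)
(* real matrices represented as functions nat -> nat -> R with
   explicit dimensions (only entries with indices below the dimension matter). *)
From Stdlib Require Export Reals Arith.
Open Scope R_scope.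

Definition Mat := nat -> nat -> R.

Fixpoint rsum (n : nat) (f : nat -> R) : R :=
  match n with O => 0 | S m => rsum m f + f m end.

Definition idm : Mat := fun i j => if Nat.eqb i j then 1 else 0.

Definition mmul (n : nat) (A B : Mat) : Mat :=
  fun i j => rsum n (fun k => A i k * B k j).

Fixpoint mpow (n : nat) (A : Mat) (k : nat) : Mat :=
  match k with O => idm | S k' => mmul n A (mpow n A k') end.

Definition is_expm (n : nat) (A : Mat) (Phi : R -> Mat) : Prop :=
  forall t i j, (i < n)%nat -> (j < n)%nat ->
    infinite_sum (fun k => mpow n A k i j * t ^ k / INR (fact k)) (Phi t i j).

Definition improper_int0 (f : R -> R) (l : R) : Prop :=
  exists pr : (forall T, Riemann_integrable f 0 T),
    forall eps, eps > 0 -> exists M, forall T, T >= M ->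
      Rabs (RiemannInt (pr T) - l) < eps.

(* Squared H2 norm of (A,B,C) (state dim n, input dim m, output dim p):
   integral over [0,oo) of the squared Frobenius norm of the impulse
   response C exp(A t) B. *)
Definition H2_norm_sq (n m p : nat) (A B C : Mat) (v : R) : Prop :=
  forall Phi, is_expm n A Phi ->
    improper_int0
      (fun t => rsum p (fun i => rsum m (fun j =>
         (mmul n (mmul n C (Phi t)) B i j) ^ 2))) v.

(* Weighted undirected graph on nodes 0..N-1; w i j >= 0 symmetric,
   an edge is present iff w i j > 0. *)
Inductive reach (N : nat) (w : Mat) : nat -> nat -> Prop :=
| reach_refl i : reach N w i i
| reach_step i k j : (k < N)%nat -> w i k > 0 -> reach N w k j -> reach N w i j.

Definition connected (N : nat) (w : Mat) : Prop :=
  forall i j, (i < N)%nat -> (j < N)%nat -> reach N w i j.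

Definition laplacian (N : nat) (w : Mat) : Mat :=
  fun i j => if Nat.eqb i j
             then rsum N (fun k => if Nat.eqb k i then 0 else w i k)
             else - w i j.

Definition is_psd_sqrt (N : nat) (L S : Mat) : Prop :=
  (forall i j, (i < N)%nat -> (j < N)%nat -> S i j = S j i) /\
  (forall x : nat -> R, 0 <= rsum N (fun i => rsum N (fun j => x i * S i j * x j))) /\
  (forall i j, (i < N)%nat -> (j < N)%nat -> mmul N S S i j = L i j).

(* lam 0 <= ... <= lam (N-1) are the eigenvalues of the symmetric L, with
   multiplicity: columns of U form an orthonormal eigenbasis. *)
Definition eigen_decomp (N : nat) (L U : Mat) (lam : nat -> R) : Prop :=
  (forall i j, (i < N)%nat -> (j < N)%nat ->
     rsum N (fun k => U k i * U k j) = idm i j) /\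
  (forall i n, (i < N)%nat -> (n < N)%nat ->
     rsum N (fun k => L i k * U k n) = lam n * U i n).

(* Block system of the paper, with state (delta, omega, V) indexed by
   0..N-1, N..2N-1, 2N..3N-1, and input/output blocks 0..N-1, N..2N-1. *)
Definition sysA (N : nat) (L : Mat) (kP tauP kQ tauQ cQ : R) : Mat :=
  fun i j =>
    let oi := (i mod N)%nat in let oj := (j mod N)%nat in
    match (i / N)%nat, (j / N)%nat with
    | 0%nat, 1%nat => idm oi oj
    | 1%nat, 0%nat => - (kP / tauP) * L oi oj
    | 1%nat, 1%nat => - (1 / tauP) * idm oi oj
    | 2%nat, 2%nat => - (cQ / tauQ) * idm oi oj - (kQ / tauQ) * L oi oj
    | _, _ => 0
    end.

Definition sysB (N : nat) (tauP tauQ : R) : Mat :=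
  fun i j =>
    let oi := (i mod N)%nat in let oj := (j mod N)%nat in
    match (i / N)%nat, (j / N)%nat with
    | 1%nat, 0%nat => (1 / tauP) * idm oi oj
    | 2%nat, 1%nat => (1 / tauQ) * idm oi oj
    | _, _ => 0
    end.

Definition sysC (N : nat) (S : Mat) (alpha : R) : Mat :=
  fun i j =>
    let oi := (i mod N)%nat in let oj := (j mod N)%nat in
    match (i / N)%nat, (j / N)%nat with
    | 0%nat, 0%nat => sqrt alpha * S oi oj
    | 1%nat, 2%nat => sqrt alpha * S oi oj
    | _, _ => 0
    end.

(* Main.v *)
Require Import Defs.
From Stdlib Require Import Reals.
Open Scope R_scope.
From Stdlib Require Import Lra Lia Psatz FunctionalExtensionality.
From Coquelicot Require Import Coquelicot.

Lemma rsum_ext n f g : (forall i, (i < n)%nat -> f i = g i) -> rsum n f = rsum n g.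
Proof.
  induction n; intros H; simpl; [reflexivity|].
  rewrite IHn by (intros; apply H; lia). rewrite H by lia. reflexivity.
Qed.

Lemma rsum_plus n f g : rsum n (fun i => f i + g i) = rsum n f + rsum n g.
Proof. induction n; simpl; [lra|]. rewrite IHn. lra. Qed.

Lemma rsum_minus n f g : rsum n (fun i => f i - g i) = rsum n f - rsum n g.
Proof. induction n; simpl; [lra|]. rewrite IHn. lra. Qed.

Lemma rsum_scal_l n c f : rsum n (fun i => c * f i) = c * rsum n f.
Proof. induction n; simpl; [lra|]. rewrite IHn. lra. Qed.

Lemma rsum_scal_r n c f : rsum n (fun i => f i * c) = rsum n f * c.
Proof. induction n; simpl; [lra|]. rewrite IHn. lra. Qed.

Lemma rsum_zero n : rsum n (fun _ => 0) = 0.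
Proof. induction n; simpl; [lra|]. rewrite IHn. lra. Qed.

Lemma rsum_zero' n f : (forall i, (i < n)%nat -> f i = 0) -> rsum n f = 0.
Proof. intros H. rewrite (rsum_ext n f (fun _ => 0)) by auto. apply rsum_zero. Qed.

Lemma rsum_swap n m (f : nat -> nat -> R) :
  rsum n (fun i => rsum m (fun j => f i j)) = rsum m (fun j => rsum n (fun i => f i j)).
Proof.
  induction n; simpl.
  - rewrite rsum_zero. reflexivity.
  - rewrite IHn. rewrite <- rsum_plus. reflexivity.
Qed.

Lemma rsum_add m n f : rsum (m + n) f = rsum m f + rsum n (fun i => f (m + i)%nat).
Proof.
  induction n; simpl.
  - rewrite Nat.add_0_r. lra.
  - rewrite Nat.add_succ_r. simpl. rewrite IHn. lra.
Qed.

Lemma rsum_delta_l n i f : (i < n)%nat -> rsum n (fun k => idm i k * f k) = f i.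
Proof.
  induction n; intros Hi; [lia|]. simpl.
  destruct (Nat.eq_dec i n) as [->|Hne].
  - rewrite rsum_zero'. unfold idm. rewrite Nat.eqb_refl. lra.
    intros k Hk. unfold idm. replace (Nat.eqb n k) with false. lra.
    symmetry. apply Nat.eqb_neq. lia.
  - rewrite IHn by lia. unfold idm. replace (Nat.eqb i n) with false. lra.
    symmetry. apply Nat.eqb_neq. lia.
Qed.

Lemma idm_sym i j : idm i j = idm j i.
Proof. unfold idm. rewrite Nat.eqb_sym. reflexivity. Qed.

Lemma rsum_delta_r n i f : (i < n)%nat -> rsum n (fun k => f k * idm k i) = f i.
Proof.
  intros Hi. rewrite <- (rsum_delta_l n i f Hi). apply rsum_ext. intros.
  rewrite idm_sym. lra.
Qed.

Lemma rsum_sq n f : (rsum n f)^2 = rsum n (fun l => rsum n (fun m => f l * f m)).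
Proof.
  replace ((rsum n f)^2) with (rsum n f * rsum n f) by ring.
  rewrite <- (rsum_scal_r n (rsum n f) f).
  apply rsum_ext. intros. rewrite <- rsum_scal_l. reflexivity.
Qed.

Lemma rsum_nonneg n f : (forall i, (i < n)%nat -> 0 <= f i) -> 0 <= rsum n f.
Proof. induction n; intros H; simpl; [lra|]. pose proof (H n ltac:(lia)). pose proof (IHn ltac:(intros; apply H; lia)). lra. Qed.

Lemma rsum_le n f g : (forall i, (i < n)%nat -> f i <= g i) -> rsum n f <= rsum n g.
Proof. induction n; intros H; simpl; [lra|]. pose proof (H n ltac:(lia)). pose proof (IHn ltac:(intros; apply H; lia)). lra. Qed.

Lemma rsum_abs n f : Rabs (rsum n f) <= rsum n (fun i => Rabs (f i)).
Proof. induction n; simpl. rewrite Rabs_R0; lra. eapply Rle_trans. apply Rabs_triang. lra. Qed.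

Lemma rsum_term_le n f i : (forall k, (k < n)%nat -> 0 <= f k) -> (i < n)%nat -> f i <= rsum n f.
Proof.
  induction n; intros H Hi; [lia|]. simpl.
  destruct (Nat.eq_dec i n) as [->|].
  - pose proof (rsum_nonneg n f ltac:(intros; apply H; lia)). lra.
  - pose proof (IHn ltac:(intros; apply H; lia) ltac:(lia)). pose proof (H n ltac:(lia)). lra.
Qed.


Lemma D_plus (f g : R -> R) (t a b : R) : is_derive f t a -> is_derive g t b ->
  is_derive (fun x => f x + g x) t (a + b).
Proof. intros. apply (is_derive_plus f g t a b); auto. Qed.

Lemma D_minus (f g : R -> R) (t a b : R) : is_derive f t a -> is_derive g t b ->
  is_derive (fun x => f x - g x) t (a - b).
Proof. intros. apply (is_derive_minus f g t a b); auto. Qed.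

Lemma D_mult (f g : R -> R) (t a b : R) : is_derive f t a -> is_derive g t b ->
  is_derive (fun x => f x * g x) t (a * g t + f t * b).
Proof. intros. apply (is_derive_mult f g t a b); auto. intros; apply Rmult_comm. Qed.

Lemma D_scal (c : R) (f : R -> R) (t a : R) : is_derive f t a -> is_derive (fun x => c * f x) t (c * a).
Proof. intros. apply is_derive_scal; auto. Qed.

Lemma D_const (c t : R) : is_derive (fun _ => c) t 0.
Proof. apply (is_derive_const c t). Qed.

Lemma D_sq (f : R -> R) (t a : R) : is_derive f t a -> is_derive (fun x => f x ^ 2) t (2 * f t * a).
Proof.
  intros H. apply (is_derive_ext (fun x => f x * f x)). intros; simpl; ring.
  replace (2 * f t * a) with (a * f t + f t * a) by ring. apply D_mult; auto.
Qed.

Lemma D_eq (f : R -> R) (t a b : R) : a = b -> is_derive f t a -> is_derive f t b.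
Proof. intros ->; auto. Qed.

Lemma D_rsum m (F : nat -> R -> R) (dF : nat -> R) t :
  (forall k, (k < m)%nat -> is_derive (F k) t (dF k)) ->
  is_derive (fun x => rsum m (fun k => F k x)) t (rsum m dF).
Proof.
  induction m; intros H; simpl.
  - apply D_const.
  - apply D_plus. apply IHm; intros; apply H; lia. apply H; lia.
Qed.

Lemma C_rsum m (F : nat -> R -> R) t :
  (forall k, (k < m)%nat -> continuous (F k) t) ->
  continuous (fun x => rsum m (fun k => F k x)) t.
Proof.
  induction m; intros H; simpl.
  - apply continuous_const.
  - apply (continuous_plus (fun x => rsum m (fun k => F k x)) (F m)).
    apply IHm; intros; apply H; lia. apply H; lia.
Qed.

Lemma C_mult (f g : R -> R) (t : R) : continuous f t -> continuous g t -> continuous (fun x => f x * g x) t.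
Proof. intros. apply (continuous_mult f g); auto. Qed.

Lemma C_plus (f g : R -> R) (t : R) : continuous f t -> continuous g t -> continuous (fun x => f x + g x) t.
Proof. intros. apply (continuous_plus f g); auto. Qed.

Lemma C_der (f : R -> R) (t a : R) : is_derive f t a -> continuous f t.
Proof. intros H. apply (ex_derive_continuous (K:=R_AbsRing) (V:=R_NormedModule)). exists a; auto. Qed.

Lemma exp_le_exp' x y : x <= y -> exp x <= exp y.
Proof. intros [H|H]. left; apply exp_increasing; auto. rewrite H; lra. Qed.

Definition tends0 (f : R -> R) := forall eps, eps > 0 -> exists M, forall T, T >= M -> Rabs (f T) < eps.

Lemma tends0_plus f g : tends0 f -> tends0 g -> tends0 (fun t => f t + g t).
Proof.
  intros Hf Hg eps He.
  destruct (Hf (eps/2) ltac:(lra)) as [M1 H1]. destruct (Hg (eps/2) ltac:(lra)) as [M2 H2].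
  exists (Rmax M1 M2). intros T HT.
  pose proof (H1 T ltac:(pose proof (Rmax_l M1 M2); lra)).
  pose proof (H2 T ltac:(pose proof (Rmax_r M1 M2); lra)).
  pose proof (Rabs_triang (f T) (g T)). lra.
Qed.

Lemma tends0_const0 : tends0 (fun _ => 0).
Proof. intros eps He. exists 0. intros. rewrite Rabs_R0. lra. Qed.

Lemma tends0_rsum m (F : nat -> R -> R) :
  (forall k, (k < m)%nat -> tends0 (F k)) -> tends0 (fun t => rsum m (fun k => F k t)).
Proof.
  induction m; intros H; simpl.
  - apply tends0_const0.
  - apply (tends0_plus (fun t => rsum m (fun k => F k t)) (F m)).
    apply IHm; intros; apply H; lia. apply H; lia.
Qed.

Lemma tends0_ext f g : (forall t, f t = g t) -> tends0 f -> tends0 g.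
Proof. intros E H eps He. destruct (H eps He) as [M HM]. exists M. intros. rewrite <- E. auto. Qed.

Lemma tends0_bound f g K : 0 <= K -> (forall t, t >= 0 -> Rabs (g t) <= K * Rabs (f t)) -> tends0 f -> tends0 g.
Proof.
  intros HK Hb Hf eps He.
  destruct (Hf (eps / (K + 1))) as [M HM].
  { apply Rdiv_lt_0_compat; lra. }
  exists (Rmax M 0). intros T HT.
  pose proof (HM T ltac:(pose proof (Rmax_l M 0); lra)) as H1.
  pose proof (Hb T ltac:(pose proof (Rmax_r M 0); lra)) as H2.
  assert (K * Rabs (f T) <= K * (eps / (K+1))) by (apply Rmult_le_compat_l; lra).
  assert (K * (eps / (K+1)) < eps).
  { unfold Rdiv. apply (Rmult_lt_reg_r (K+1)). lra. 
    replace (K * (eps * / (K + 1)) * (K + 1)) with (K * eps) by (field; lra). nra. }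
  lra.
Qed.

Lemma tends0_exp C e : e > 0 -> tends0 (fun t => C * exp (- e * t)).
Proof.
  intros He eps Heps.
  set (r := eps / (Rabs C + 1)).
  assert (Hr : r > 0) by (unfold r; apply Rdiv_lt_0_compat; pose proof (Rabs_pos C); lra).
  exists (Rabs (ln r) / e). intros T HT.
  rewrite Rabs_mult. rewrite (Rabs_right (exp _)) by (left; apply exp_pos).
  assert (exp (- e * T) <= r).
  { rewrite <- (exp_ln r Hr). apply exp_le_exp'.
    assert (e * T >= Rabs (ln r)).
    { apply Rle_ge. apply (Rmult_le_reg_r (/ e)). apply Rinv_0_lt_compat; lra.
      replace (e * T * / e) with T by (field; lra). unfold Rdiv in HT. lra. }
    pose proof (Rle_abs (- ln r)). rewrite Rabs_Ropp in H0. lra. }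
  assert (Rabs C * exp (- e * T) <= Rabs C * r) by (apply Rmult_le_compat_l; [apply Rabs_pos|lra]).
  assert (Rabs C * r < eps).
  { unfold r, Rdiv. apply (Rmult_lt_reg_r (Rabs C + 1)). pose proof (Rabs_pos C); lra.
    replace (Rabs C * (eps * / (Rabs C + 1)) * (Rabs C + 1)) with (Rabs C * eps) by (field; pose proof (Rabs_pos C); lra).
    pose proof (Rabs_pos C). nra. }
  lra.
Qed.

Lemma decay (W dW : R -> R) (e : R) : e > 0 -> (forall t, is_derive W t (dW t)) -> (forall t, dW t <= - e * W t) ->
  forall t, t >= 0 -> W t <= W 0 * exp (- e * t).
Proof.
  intros He HD Hle t Ht.
  set (h := fun s => W s * exp (e * s)).
  assert (Hh : forall s, is_derive h s (dW s * exp (e * s) + W s * (e * exp (e * s)))).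
  { intros s. unfold h. apply (D_mult W (fun s => exp (e * s))). auto.
    assert (H1 : is_derive (fun s => e * s) s e).
    { eapply D_eq; [| apply D_scal; apply (is_derive_id s)]. unfold one; simpl. ring. }
    pose proof (is_derive_comp exp (fun s => e * s) s (exp (e*s)) e (is_derive_exp _) H1) as H2.
    eapply D_eq; [| exact H2]. unfold scal; simpl; unfold mult; simpl. ring. }
  assert (h t <= h 0).
  { destruct (Req_dec t 0) as [->|Hne]. lra.
    destruct (MVT_gen h 0 t (fun s => dW s * exp (e * s) + W s * (e * exp (e * s)))) as [c [Hc Heq]].
    - intros; apply Hh.
    - intros. apply continuity_pt_filterlim. apply (C_der h x _ (Hh x)).
    - rewrite Rmin_left in Hc by lra. rewrite Rmax_right in Hc by lra.
      pose proof (Hle c). pose proof (exp_pos (e * c)).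
      assert (dW c * exp (e * c) + W c * (e * exp (e * c)) <= 0) by nra.
      assert ((dW c * exp (e * c) + W c * (e * exp (e * c))) * (t - 0) <= 0) by nra.
      lra. }
  unfold h in H. rewrite Rmult_0_r, exp_0, Rmult_1_r in H.
  assert (exp (e * t) * exp (- e * t) = 1) by (rewrite <- exp_plus; replace (e * t + - e * t) with 0 by ring; apply exp_0).
  pose proof (exp_pos (- e * t)).
  replace (W t) with (W t * exp (e * t) * exp (- e * t)) by (rewrite Rmult_assoc, H0; ring).
  apply Rmult_le_compat_r; lra.
Qed.

Lemma improper_from_primitive (f G : R -> R) :
  (forall t, is_derive G t (- f t)) -> (forall t, continuous f t) -> tends0 G ->
  improper_int0 f (G 0).
Proof.
  intros HD HC HT.
  assert (pr : forall T, Riemann_integrable f 0 T).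
  { intros T. apply ex_RInt_Reals_0. apply (ex_RInt_continuous (V:=R_CompleteNormedModule)). intros; apply HC. }
  exists pr. intros eps He. destruct (HT eps He) as [M HM]. exists M. intros T HTM.
  rewrite <- RInt_Reals.
  assert (Hi : is_RInt f 0 T (minus (- G T) (- G 0))).
  { apply (is_RInt_derive (fun t => - G t) f).
    - intros. eapply D_eq; [| apply (is_derive_opp G x _ (HD x))]. unfold opp; simpl. ring.
    - intros; apply HC. }
  rewrite (is_RInt_unique _ _ _ _ Hi). unfold minus, plus, opp; simpl.
  replace (- G T + - - G 0 - G 0) with (- G T) by ring. rewrite Rabs_Ropp. auto.
Qed.


Lemma pow_fact_le_exp y k : 0 <= y -> y ^ k / INR (fact k) <= exp y.
Proof.
  intros Hy.
  set (An := fun i => / INR (fact i) * y ^ i).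
  assert (Hpos : forall i, 0 <= An i).
  { intros i. unfold An. apply Rmult_le_pos. left. apply Rinv_0_lt_compat. apply INR_fact_lt_0. apply pow_le; auto. }
  assert (H1 : An k <= sum_f_R0 An k).
  { destruct k. simpl; right; reflexivity. rewrite tech5. pose proof (cond_pos_sum An k Hpos). lra. }
  assert (H2 : sum_f_R0 An k <= exp y).
  { apply sum_incr; auto. exact (proj2_sig (exist_exp y)). }
  unfold An in H1. eapply Rle_trans; [|exact H2]. eapply Rle_trans; [|exact H1]. right; unfold Rdiv; ring.
Qed.

Definition Abound (n : nat) (A : Mat) := rsum n (fun i => rsum n (fun j => Rabs (A i j))) + 1.

Lemma Abound_ge n A i : (i < n)%nat -> rsum n (fun j => Rabs (A i j)) + 1 <= Abound n A.
Proof.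
  intros Hi. unfold Abound.
  pose proof (rsum_term_le n (fun i => rsum n (fun j => Rabs (A i j))) i
     ltac:(intros; apply rsum_nonneg; intros; apply Rabs_pos) Hi). simpl in H. lra.
Qed.

Lemma Abound_pos n A : 1 <= Abound n A.
Proof.
  unfold Abound. pose proof (rsum_nonneg n (fun i => rsum n (fun j => Rabs (A i j)))
     ltac:(intros; apply rsum_nonneg; intros; apply Rabs_pos)). lra.
Qed.

Lemma mpow_bound n A k i j : (i < n)%nat -> (j < n)%nat -> Rabs (mpow n A k i j) <= (Abound n A) ^ k.
Proof.
  revert i j. induction k; intros i j Hi Hj; simpl.
  - unfold idm. destruct (Nat.eqb i j); [rewrite Rabs_R1|rewrite Rabs_R0]; lra.
  - unfold mmul. eapply Rle_trans. apply rsum_abs.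
    eapply Rle_trans. apply (rsum_le _ _ (fun l => Rabs (A i l) * Abound n A ^ k)).
    { intros l Hl. rewrite Rabs_mult. apply Rmult_le_compat_l. apply Rabs_pos. apply IHk; auto. }
    rewrite rsum_scal_r. pose proof (Abound_ge n A i Hi).
    pose proof (pow_le (Abound n A) k ltac:(pose proof (Abound_pos n A); lra)).
    apply Rmult_le_compat_r; lra.
Qed.

Definition coef (n : nat) (A : Mat) (i j : nat) (k : nat) := mpow n A k i j / INR (fact k).

Lemma coef_radius n A i j x : (i < n)%nat -> (j < n)%nat -> Rbar_lt (Rabs x) (CV_radius (coef n A i j)).
Proof.
  intros Hi Hj.
  destruct (CV_radius_bounded (coef n A i j)) as [Hub _].
  set (c := Abound n A). set (r := Rabs x + 1).
  assert (Hr : 0 <= r) by (unfold r; pose proof (Rabs_pos x); lra).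
  assert (Hc : 1 <= c) by apply Abound_pos.
  assert (HE : exists M, forall k, Rabs (coef n A i j k * r ^ k) <= M).
  { exists (exp (c * r)). intros k. unfold coef.
    rewrite Rabs_mult. unfold Rdiv. rewrite Rabs_mult.
    rewrite (Rabs_right (/ INR (fact k))) by (left; apply Rinv_0_lt_compat, INR_fact_lt_0).
    rewrite (Rabs_right (r ^ k)) by (apply Rle_ge, pow_le; auto).
    eapply Rle_trans; [| apply (pow_fact_le_exp (c * r) k); nra].
    rewrite Rpow_mult_distr. unfold Rdiv.
    pose proof (mpow_bound n A k i j Hi Hj). fold c in H.
    pose proof (pow_le r k Hr). pose proof (Rinv_0_lt_compat _ (INR_fact_lt_0 k)).
    assert (Rabs (mpow n A k i j) * r ^ k <= c ^ k * r ^ k) by (apply Rmult_le_compat_r; lra).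
    nra. }
  specialize (Hub r HE).
  eapply Rbar_lt_le_trans; [| exact Hub]. simpl. unfold r. lra.
Qed.

Lemma is_pseries_rsum m (b : nat -> nat -> R) (x : R) (s : nat -> R) :
  (forall l, (l < m)%nat -> @is_pseries R_AbsRing R_NormedModule (b l) x (s l)) ->
  @is_pseries R_AbsRing R_NormedModule (fun k => rsum m (fun l => b l k)) x (rsum m s).
Proof.
  induction m; intros H; simpl.
  - pose proof (PSeries_const_0 x) as E.
    assert (H0 : ex_pseries (fun _ : nat => 0) x).
    { apply CV_radius_inside. rewrite CV_radius_const_0. simpl; auto. }
    pose proof (PSeries_correct _ x H0) as H1. rewrite E in H1. exact H1.
  - pose proof (is_pseries_plus _ _ x _ _ (IHm ltac:(intros; apply H; lia)) (H m ltac:(lia))) as HP.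
    apply (is_pseries_ext _ _ x _ (fun k => eq_refl) ) in HP.
    exact HP.
Qed.

Section Expm.
Variables (n : nat) (A : Mat) (Phi : R -> Mat).
Hypothesis HPhi : is_expm n A Phi.

Lemma Phi_eq t i j : (i < n)%nat -> (j < n)%nat -> Phi t i j = PSeries (coef n A i j) t.
Proof.
  intros Hi Hj.
  pose proof (PSeries_correct _ t (CV_radius_inside _ _ (coef_radius n A i j t Hi Hj))) as H.
  apply is_pseries_Reals in H. unfold Pser in H.
  pose proof (HPhi t i j Hi Hj) as H2.
  replace (fun k => mpow n A k i j * t ^ k / INR (fact k)) with (fun k => coef n A i j k * t ^ k) in H2.
  eapply uniqueness_sum; eauto.
  apply functional_extensionality. intros k. unfold coef. field. apply INR_fact_neq_0.
Qed.

Lemma Phi_0 i j : (i < n)%nat -> (j < n)%nat -> Phi 0 i j = idm i j.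
Proof.
  intros Hi Hj. rewrite Phi_eq by auto. rewrite PSeries_0. unfold coef. simpl. field.
Qed.

Lemma Phi_deriv t i j : (i < n)%nat -> (j < n)%nat ->
  is_derive (fun t => Phi t i j) t (rsum n (fun l => A i l * Phi t l j)).
Proof.
  intros Hi Hj.
  pose proof (is_derive_PSeries _ t (coef_radius n A i j t Hi Hj)) as H.
  apply (is_derive_ext _ _ _ _ (fun s => eq_sym (Phi_eq s i j Hi Hj))) in H.
  eapply D_eq; [| exact H].
  rewrite (PSeries_ext _ (fun k => rsum n (fun l => A i l * coef n A l j k))).
  - apply is_pseries_unique. apply is_pseries_rsum.
    intros l Hl. rewrite Phi_eq by auto.
    pose proof (is_pseries_scal (A i l) (coef n A l j) t _ (Rmult_comm _ _)
       (PSeries_correct _ t (CV_radius_inside _ _ (coef_radius n A l j t Hl Hj)))) as HS.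
    exact HS.
  - intros k. unfold PS_derive, coef. simpl mpow. unfold mmul.
    rewrite (rsum_ext n (fun l => A i l * (mpow n A k l j / INR (fact k))) (fun l => (A i l * mpow n A k l j) * / INR (fact k))) by (intros; unfold Rdiv; ring).
    rewrite rsum_scal_r. rewrite fact_simpl, mult_INR.
    field. split. apply INR_fact_neq_0. apply not_0_INR. lia.
Qed.

End Expm.


Lemma quad_bound c1 c2 c3 x y :
  Rabs (c1 * x ^ 2 + c2 * x * y + c3 * y ^ 2) <= (Rabs c1 + Rabs c2 + Rabs c3) * (x ^ 2 + y ^ 2).
Proof.
  eapply Rle_trans. apply Rabs_triang. eapply Rle_trans. apply Rplus_le_compat_r. apply Rabs_triang.
  rewrite !Rabs_mult.
  assert (Rabs x * Rabs y <= x^2 + y^2).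
  { pose proof (Rabs_pos x). pose proof (Rabs_pos y).
    assert (E1 : Rabs x ^2 = x^2) by (rewrite RPow_abs; apply Rabs_right; apply Rle_ge; apply pow2_ge_0).
    assert (E2 : Rabs y ^2 = y^2) by (rewrite RPow_abs; apply Rabs_right; apply Rle_ge; apply pow2_ge_0).
    pose proof (pow2_ge_0 (Rabs x - Rabs y)) as E3.
    replace ((Rabs x - Rabs y)^2) with (Rabs x ^2 + Rabs y ^2 - 2 * (Rabs x * Rabs y)) in E3 by ring.
    rewrite E1, E2 in E3. pose proof (pow2_ge_0 x). pose proof (pow2_ge_0 y). lra. }
  rewrite !(Rabs_right (_ ^ 2)) by (apply Rle_ge; apply pow2_ge_0).
  pose proof (Rabs_pos c1). pose proof (Rabs_pos c2). pose proof (Rabs_pos c3).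
  pose proof (pow2_ge_0 x). pose proof (pow2_ge_0 y).
  assert (Rabs c2 * Rabs x * Rabs y <= Rabs c2 * (x^2 + y^2)) by (rewrite Rmult_assoc; apply Rmult_le_compat_l; lra).
  assert (Rabs c1 * x^2 <= Rabs c1 * (x^2 + y^2)) by (apply Rmult_le_compat_l; lra).
  assert (Rabs c3 * y^2 <= Rabs c3 * (x^2 + y^2)) by (apply Rmult_le_compat_l; lra).
  lra.
Qed.

Lemma osc_tends0 (a b lam : R) (d w : R -> R) :
  a > 0 -> b > 0 -> lam > 0 ->
  (forall t, is_derive d t (w t)) ->
  (forall t, is_derive w t (- a * lam * d t - b * w t)) ->
  tends0 (fun t => d t ^ 2 + w t ^ 2).
Proof.
  intros Ha Hb Hl Hd Hw.
  set (W := fun t => (b + 2 * a * lam / b) * d t ^ 2 + 2 * d t * w t + (2 / b) * w t ^ 2).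
  set (dW := fun t => - (2 * a * lam * d t ^ 2 + 2 * w t ^ 2)).
  set (p := b + 2 * a * lam / b + 1). set (q := 1 + 2 / b). set (s := 2 * a * lam).
  assert (Hp : p > 0) by (unfold p; assert (2 * a * lam / b > 0) by (apply Rdiv_lt_0_compat; nra); lra).
  assert (Hq : q > 0) by (unfold q; assert (2 / b > 0) by (apply Rdiv_lt_0_compat; lra); lra).
  assert (Hs : s > 0) by (unfold s; nra).
  set (K := p / s + q / 2).
  assert (HKs : K * s >= p).
  { replace (K * s) with (p + q * s / 2) by (unfold K; field; lra).
    assert (q * s > 0) by (apply Rmult_lt_0_compat; lra). lra. }
  assert (HK2 : 2 * K >= q) by (unfold K; assert (p / s > 0) by (apply Rdiv_lt_0_compat; lra); lra).
  assert (HK : K > 0) by (unfold K; assert (p / s > 0) by (apply Rdiv_lt_0_compat; lra); lra).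
  assert (HD : forall t, is_derive W t (dW t)).
  { intros t. unfold W, dW.
    pose proof (D_scal (b + 2 * a * lam / b) _ t _ (D_sq d t _ (Hd t))) as H1.
    pose proof (D_mult (fun t => 2 * d t) w t _ _ (D_scal 2 d t _ (Hd t)) (Hw t)) as H2.
    pose proof (D_scal (2 / b) _ t _ (D_sq w t _ (Hw t))) as H3.
    pose proof (D_plus _ _ t _ _ (D_plus _ _ t _ _ H1 H2) H3) as H4. simpl in H4.
    eapply D_eq; [| exact H4]. field. lra. }
  assert (Hle : forall t, dW t <= - (/ K) * W t).
  { intros t. unfold dW, W.
    set (x := d t). set (y := w t).
    assert (HW : (b + 2 * a * lam / b) * x ^ 2 + 2 * x * y + 2 / b * y ^ 2 <= p * x^2 + q * y^2).
    { unfold p, q. assert (2 * x * y <= x^2 + y^2) by (pose proof (pow2_ge_0 (x - y)); lra). lra. }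
    assert (p * x^2 + q * y^2 <= K * (s * x^2 + 2 * y^2)).
    { assert (p * x^2 <= K * s * x^2) by (apply Rmult_le_compat_r; [apply pow2_ge_0|lra]).
      assert (q * y^2 <= 2 * K * y^2) by (apply Rmult_le_compat_r; [apply pow2_ge_0|lra]). lra. }
    assert (Wle : (b + 2 * a * lam / b) * x ^ 2 + 2 * x * y + 2 / b * y ^ 2 <= K * (s * x^2 + 2 * y^2)) by lra.
    apply (Rmult_le_reg_l K); [lra|].
    replace (K * (- / K * ((b + 2 * a * lam / b) * x ^ 2 + 2 * x * y + 2 / b * y ^ 2))) with
      (- ((b + 2 * a * lam / b) * x ^ 2 + 2 * x * y + 2 / b * y ^ 2)) by (field; lra).
    unfold s in Wle. lra. }
  assert (He : / K > 0) by (apply Rinv_0_lt_compat; lra).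
  pose proof (decay W dW (/ K) He HD Hle) as Hdec.
  apply (tends0_bound (fun t => W 0 * exp (- / K * t)) _ (2 / b + b)).
  { assert (2 / b > 0) by (apply Rdiv_lt_0_compat; lra). lra. }
  2: apply tends0_exp; auto.
  intros t Ht. specialize (Hdec t Ht).
  assert (HE : d t ^ 2 + w t ^ 2 <= (2 / b + b) * W t).
  { unfold W. set (x := d t). set (y := w t). set (u := b * x + y).
    assert (Wge : (b + 2 * a * lam / b) * x ^ 2 + 2 * x * y + 2 / b * y ^ 2 >= (u^2 + y^2) / b).
    { unfold u. apply Rle_ge. apply (Rmult_le_reg_l b); [lra|].
      replace (b * (((b * x + y) ^ 2 + y ^ 2) / b)) with ((b * x + y) ^ 2 + y ^ 2) by (field; lra).
      replace (b * ((b + 2 * a * lam / b) * x ^ 2 + 2 * x * y + 2 / b * y ^ 2))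
        with (b^2 * x^2 + 2 * a * lam * x^2 + 2 * b * x * y + 2 * y^2) by (field; lra).
      assert (0 <= a * lam * x^2) by (apply Rmult_le_pos; [nra|apply pow2_ge_0]). lra. }
    set (Wv := (b + 2 * a * lam / b) * x ^ 2 + 2 * x * y + 2 / b * y ^ 2) in *.
    assert (H1 : u^2 + y^2 <= b * Wv).
    { apply Rge_le in Wge. apply (Rmult_le_compat_l b) in Wge; [|lra].
      replace (b * ((u ^ 2 + y ^ 2) / b)) with (u^2 + y^2) in Wge by (field; lra). lra. }
    assert (H2 : b^2 * x^2 <= 2 * (u^2 + y^2)).
    { replace (b^2 * x^2) with ((u - y)^2) by (unfold u; ring). pose proof (pow2_ge_0 (u + y)). lra. }
    assert (H3 : x^2 <= 2 / b * Wv).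
    { apply (Rmult_le_reg_l (b^2)); [apply pow_lt; lra|].
      replace (b^2 * (2 / b * Wv)) with (2 * (b * Wv)) by (field; lra). lra. }
    assert (H4 : y^2 <= b * Wv) by (pose proof (pow2_ge_0 u); lra).
    lra. }
  assert (HW0 : 0 <= W t).
  { pose proof (pow2_ge_0 (d t)). pose proof (pow2_ge_0 (w t)).
    assert ((2 / b + b) > 0) by (assert (2 / b > 0) by (apply Rdiv_lt_0_compat; lra); lra).
    assert (0 <= (2/b + b) * W t) by lra.
    apply (Rmult_le_reg_l (2/b+b)); lra. }
  rewrite Rabs_right by (apply Rle_ge; pose proof (pow2_ge_0 (d t)); pose proof (pow2_ge_0 (w t)); lra).
  eapply Rle_trans; [exact HE|]. apply Rmult_le_compat_l.
  { assert (2 / b > 0) by (apply Rdiv_lt_0_compat; lra). lra. }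
  eapply Rle_trans; [exact Hdec|]. apply Rle_abs.
Qed.

Lemma decay_tends0 (mu : R) (v : R -> R) :
  mu > 0 -> (forall t, is_derive v t (- mu * v t)) -> tends0 (fun t => v t ^ 2).
Proof.
  intros Hm Hv.
  assert (HD : forall t, is_derive (fun t => v t ^ 2) t (- (2 * mu) * v t ^ 2)).
  { intros t. eapply D_eq; [| apply D_sq; apply Hv]. ring. }
  pose proof (decay (fun t => v t ^ 2) (fun t => - (2 * mu) * v t ^ 2) (2 * mu) ltac:(lra) HD
    ltac:(intros; lra)) as Hdec.
  apply (tends0_bound (fun t => v 0 ^ 2 * exp (- (2 * mu) * t)) _ 1). lra.
  2: apply tends0_exp; lra.
  intros t Ht. specialize (Hdec t Ht). simpl in Hdec.
  rewrite Rabs_right by (apply Rle_ge, pow2_ge_0). rewrite Rmult_1_l.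
  eapply Rle_trans; [exact Hdec|]. apply Rle_abs.
Qed.


Lemma mmul_assoc n A B C i j : mmul n (mmul n A B) C i j = mmul n A (mmul n B C) i j.
Proof.
  unfold mmul.
  rewrite (rsum_ext n _ (fun m => rsum n (fun k => A i k * B k m * C m j)))
    by (intros; rewrite <- rsum_scal_r; reflexivity).
  rewrite rsum_swap. apply rsum_ext. intros k Hk. rewrite <- rsum_scal_l.
  apply rsum_ext. intros; ring.
Qed.

Lemma blk_div N q r : (r < N)%nat -> ((q * N + r) / N)%nat = q.
Proof. intros H. symmetry. apply (Nat.div_unique _ _ _ r); lia. Qed.

Lemma blk_mod N q r : (r < N)%nat -> ((q * N + r) mod N)%nat = r.
Proof. intros H. symmetry. apply (Nat.mod_unique _ _ q); lia. Qed.

Lemma rsum3 N f : rsum (3 * N) f =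
  rsum N (fun l => f (0 * N + l)%nat) + rsum N (fun l => f (1 * N + l)%nat) + rsum N (fun l => f (2 * N + l)%nat).
Proof.
  replace (3 * N)%nat with (N + N + N)%nat by lia.
  rewrite rsum_add, rsum_add.
  f_equal; [f_equal|]; apply rsum_ext; intros; f_equal; lia.
Qed.

Lemma rsum2 N f : rsum (2 * N) f =
  rsum N (fun l => f (0 * N + l)%nat) + rsum N (fun l => f (1 * N + l)%nat).
Proof.
  replace (2 * N)%nat with (N + N)%nat by lia.
  rewrite rsum_add. f_equal; apply rsum_ext; intros; f_equal; lia.
Qed.

Ltac blk := intros;
  unfold sysA, sysB, sysC; cbv zeta;
  repeat (rewrite blk_div by assumption); repeat (rewrite blk_mod by assumption); reflexivity.

Section Blocks.
Variables (N : nat) (L S : Mat) (kP tauP kQ tauQ cQ alpha : R).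
Local Notation A := (sysA N L kP tauP kQ tauQ cQ).
Local Notation B := (sysB N tauP tauQ).
Local Notation C := (sysC N S alpha).

Lemma A00 l m : (l < N)%nat -> (m < N)%nat -> A (0*N+l)%nat (0*N+m)%nat = 0. Proof. blk. Qed.
Lemma A01 l m : (l < N)%nat -> (m < N)%nat -> A (0*N+l)%nat (1*N+m)%nat = idm l m. Proof. blk. Qed.
Lemma A02 l m : (l < N)%nat -> (m < N)%nat -> A (0*N+l)%nat (2*N+m)%nat = 0. Proof. blk. Qed.
Lemma A10 l m : (l < N)%nat -> (m < N)%nat -> A (1*N+l)%nat (0*N+m)%nat = - (kP / tauP) * L l m. Proof. blk. Qed.
Lemma A11 l m : (l < N)%nat -> (m < N)%nat -> A (1*N+l)%nat (1*N+m)%nat = - (1 / tauP) * idm l m. Proof. blk. Qed.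
Lemma A12 l m : (l < N)%nat -> (m < N)%nat -> A (1*N+l)%nat (2*N+m)%nat = 0. Proof. blk. Qed.
Lemma A20 l m : (l < N)%nat -> (m < N)%nat -> A (2*N+l)%nat (0*N+m)%nat = 0. Proof. blk. Qed.
Lemma A21 l m : (l < N)%nat -> (m < N)%nat -> A (2*N+l)%nat (1*N+m)%nat = 0. Proof. blk. Qed.
Lemma A22 l m : (l < N)%nat -> (m < N)%nat -> A (2*N+l)%nat (2*N+m)%nat = - (cQ / tauQ) * idm l m - (kQ / tauQ) * L l m. Proof. blk. Qed.

Lemma B00 l m : (l < N)%nat -> (m < N)%nat -> B (0*N+l)%nat (0*N+m)%nat = 0. Proof. blk. Qed.
Lemma B01 l m : (l < N)%nat -> (m < N)%nat -> B (0*N+l)%nat (1*N+m)%nat = 0. Proof. blk. Qed.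
Lemma B10 l m : (l < N)%nat -> (m < N)%nat -> B (1*N+l)%nat (0*N+m)%nat = (1 / tauP) * idm l m. Proof. blk. Qed.
Lemma B11 l m : (l < N)%nat -> (m < N)%nat -> B (1*N+l)%nat (1*N+m)%nat = 0. Proof. blk. Qed.
Lemma B20 l m : (l < N)%nat -> (m < N)%nat -> B (2*N+l)%nat (0*N+m)%nat = 0. Proof. blk. Qed.
Lemma B21 l m : (l < N)%nat -> (m < N)%nat -> B (2*N+l)%nat (1*N+m)%nat = (1 / tauQ) * idm l m. Proof. blk. Qed.

Lemma C00 l m : (l < N)%nat -> (m < N)%nat -> C (0*N+l)%nat (0*N+m)%nat = sqrt alpha * S l m. Proof. blk. Qed.
Lemma C01 l m : (l < N)%nat -> (m < N)%nat -> C (0*N+l)%nat (1*N+m)%nat = 0. Proof. blk. Qed.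
Lemma C02 l m : (l < N)%nat -> (m < N)%nat -> C (0*N+l)%nat (2*N+m)%nat = 0. Proof. blk. Qed.
Lemma C10 l m : (l < N)%nat -> (m < N)%nat -> C (1*N+l)%nat (0*N+m)%nat = 0. Proof. blk. Qed.
Lemma C11 l m : (l < N)%nat -> (m < N)%nat -> C (1*N+l)%nat (1*N+m)%nat = 0. Proof. blk. Qed.
Lemma C12 l m : (l < N)%nat -> (m < N)%nat -> C (1*N+l)%nat (2*N+m)%nat = sqrt alpha * S l m. Proof. blk. Qed.

End Blocks.


Section Main.
Variables (N : nat) (L U S : Mat) (lam : nat -> R) (kP tauP kQ tauQ cQ alpha : R).
Hypothesis HLsym : forall i j, (i < N)%nat -> (j < N)%nat -> L i j = L j i.
Hypothesis HUorth : forall i j, (i < N)%nat -> (j < N)%nat -> rsum N (fun k => U k i * U k j) = idm i j.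
Hypothesis HUorth2 : forall i j, (i < N)%nat -> (j < N)%nat -> rsum N (fun k => U i k * U j k) = idm i j.
Hypothesis HUeig : forall i n, (i < N)%nat -> (n < N)%nat -> rsum N (fun k => L i k * U k n) = lam n * U i n.
Hypothesis Hlam0 : lam 0%nat = 0.
Hypothesis Hlampos : forall n, (0 < n)%nat -> (n < N)%nat -> 0 < lam n.
Hypothesis HSsym : forall i j, (i < N)%nat -> (j < N)%nat -> S i j = S j i.
Hypothesis HSS : forall i j, (i < N)%nat -> (j < N)%nat -> mmul N S S i j = L i j.
Hypotheses (HkP : 0 < kP) (HtauP : 0 < tauP) (HkQ : 0 < kQ) (HtauQ : 0 < tauQ) (HcQ : 0 < cQ) (Halpha : 0 < alpha).

Lemma L_spec l m : (l < N)%nat -> (m < N)%nat -> L l m = rsum N (fun n => lam n * U l n * U m n).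
Proof.
  intros Hl Hm.
  rewrite (rsum_ext N _ (fun n => rsum N (fun k => L l k * U k n) * U m n))
    by (intros; rewrite HUeig by auto; ring).
  rewrite (rsum_ext N _ (fun n => rsum N (fun k => L l k * U k n * U m n)))
    by (intros; rewrite <- rsum_scal_r; reflexivity).
  rewrite rsum_swap.
  rewrite (rsum_ext N _ (fun k => L l k * idm k m)).
  - rewrite rsum_delta_r by auto. reflexivity.
  - intros k Hk. rewrite <- HUorth2 by auto. rewrite <- rsum_scal_l. apply rsum_ext; intros; ring.
Qed.

Lemma quadS (y : nat -> R) :
  rsum N (fun i => (rsum N (fun l => S i l * y l)) ^ 2) =
  rsum N (fun n => lam n * (rsum N (fun l => U l n * y l)) ^ 2).
Proof.
  transitivity (rsum N (fun l => rsum N (fun m => y l * y m * L l m))).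
  - rewrite (rsum_ext N _ (fun i => rsum N (fun l => rsum N (fun m => S i l * y l * (S i m * y m)))))
      by (intros; apply rsum_sq).
    rewrite rsum_swap. apply rsum_ext. intros l Hl.
    rewrite rsum_swap. apply rsum_ext. intros m Hm.
    rewrite <- HSS by auto. unfold mmul. rewrite <- rsum_scal_l.
    apply rsum_ext. intros i Hi. rewrite (HSsym l i) by auto. ring.
  - rewrite (rsum_ext N (fun n => lam n * (rsum N (fun l => U l n * y l)) ^ 2)
       (fun n => rsum N (fun l => rsum N (fun m => lam n * (U l n * y l * (U m n * y m))))))
      by (intros; rewrite rsum_sq, <- rsum_scal_l; apply rsum_ext; intros; rewrite <- rsum_scal_l; reflexivity).
    symmetry.
    rewrite rsum_swap. apply rsum_ext. intros l Hl.
    rewrite rsum_swap. apply rsum_ext. intros m Hm.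
    rewrite L_spec by auto. rewrite <- rsum_scal_l. apply rsum_ext; intros; ring.
Qed.

Lemma modalL n (z : nat -> R) : (n < N)%nat ->
  rsum N (fun l => U l n * rsum N (fun m => L l m * z m)) = lam n * rsum N (fun m => U m n * z m).
Proof.
  intros Hn.
  rewrite (rsum_ext N _ (fun l => rsum N (fun m => U l n * L l m * z m)))
    by (intros; rewrite <- rsum_scal_l; apply rsum_ext; intros; ring).
  rewrite rsum_swap. rewrite <- rsum_scal_l. apply rsum_ext. intros m Hm.
  rewrite (rsum_scal_r N (z m) (fun l => U l n * L l m)).
  rewrite (rsum_ext N (fun l => U l n * L l m) (fun l => L m l * U l n))
    by (intros; rewrite HLsym by auto; ring).
  rewrite HUeig by auto. ring.
Qed.

Local Notation A := (sysA N L kP tauP kQ tauQ cQ).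
Local Notation B := (sysB N tauP tauQ).
Local Notation C := (sysC N S alpha).

Lemma AZ0 l (Z : nat -> R) : (l < N)%nat -> rsum (3 * N) (fun m => A (0*N+l)%nat m * Z m) = Z (1*N+l)%nat.
Proof.
  intros Hl. rewrite rsum3.
  rewrite (rsum_zero' N (fun m => A (0*N+l)%nat (0*N+m)%nat * Z (0*N+m)%nat)) by (intros; rewrite A00 by auto; ring).
  rewrite (rsum_zero' N (fun m => A (0*N+l)%nat (2*N+m)%nat * Z (2*N+m)%nat)) by (intros; rewrite A02 by auto; ring).
  rewrite (rsum_ext N _ (fun m => idm l m * Z (1*N+m)%nat)) by (intros; rewrite A01 by auto; ring).
  rewrite rsum_delta_l by auto. ring.
Qed.

Lemma AZ1 l (Z : nat -> R) : (l < N)%nat -> rsum (3 * N) (fun m => A (1*N+l)%nat m * Z m) =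
  - (kP / tauP) * rsum N (fun m => L l m * Z (0*N+m)%nat) - (1 / tauP) * Z (1*N+l)%nat.
Proof.
  intros Hl. rewrite rsum3.
  rewrite (rsum_zero' N (fun m => A (1*N+l)%nat (2*N+m)%nat * Z (2*N+m)%nat)) by (intros; rewrite A12 by auto; ring).
  rewrite (rsum_ext N (fun m => A (1*N+l)%nat (1*N+m)%nat * Z (1*N+m)%nat) (fun m => idm l m * (- (1 / tauP) * Z (1*N+m)%nat))) by (intros; rewrite A11 by auto; ring).
  rewrite rsum_delta_l by auto.
  rewrite (rsum_ext N _ (fun m => - (kP / tauP) * (L l m * Z (0*N+m)%nat))) by (intros; rewrite A10 by auto; ring).
  rewrite rsum_scal_l. ring.
Qed.

Lemma AZ2 l (Z : nat -> R) : (l < N)%nat -> rsum (3 * N) (fun m => A (2*N+l)%nat m * Z m) =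
  - (cQ / tauQ) * Z (2*N+l)%nat - (kQ / tauQ) * rsum N (fun m => L l m * Z (2*N+m)%nat).
Proof.
  intros Hl. rewrite rsum3.
  rewrite (rsum_zero' N (fun m => A (2*N+l)%nat (0*N+m)%nat * Z (0*N+m)%nat)) by (intros; rewrite A20 by auto; ring).
  rewrite (rsum_zero' N (fun m => A (2*N+l)%nat (1*N+m)%nat * Z (1*N+m)%nat)) by (intros; rewrite A21 by auto; ring).
  rewrite (rsum_ext N _ (fun m => idm l m * (- (cQ / tauQ) * Z (2*N+m)%nat) + (- (kQ / tauQ)) * (L l m * Z (2*N+m)%nat)))
    by (intros; rewrite A22 by auto; ring).
  rewrite rsum_plus, rsum_delta_l, rsum_scal_l by auto. ring.
Qed.

Lemma CY0 i (Y : nat -> R) : (i < N)%nat -> rsum (3 * N) (fun k => C (0*N+i)%nat k * Y k) =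
  sqrt alpha * rsum N (fun l => S i l * Y (0*N+l)%nat).
Proof.
  intros Hi. rewrite rsum3.
  rewrite (rsum_zero' N (fun m => C (0*N+i)%nat (1*N+m)%nat * Y (1*N+m)%nat)) by (intros; rewrite C01 by auto; ring).
  rewrite (rsum_zero' N (fun m => C (0*N+i)%nat (2*N+m)%nat * Y (2*N+m)%nat)) by (intros; rewrite C02 by auto; ring).
  rewrite <- rsum_scal_l. rewrite (rsum_ext N _ (fun l => sqrt alpha * (S i l * Y (0*N+l)%nat))) by (intros; rewrite C00 by auto; ring).
  ring.
Qed.

Lemma CY1 i (Y : nat -> R) : (i < N)%nat -> rsum (3 * N) (fun k => C (1*N+i)%nat k * Y k) =
  sqrt alpha * rsum N (fun l => S i l * Y (2*N+l)%nat).
Proof.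
  intros Hi. rewrite rsum3.
  rewrite (rsum_zero' N (fun m => C (1*N+i)%nat (0*N+m)%nat * Y (0*N+m)%nat)) by (intros; rewrite C10 by auto; ring).
  rewrite (rsum_zero' N (fun m => C (1*N+i)%nat (1*N+m)%nat * Y (1*N+m)%nat)) by (intros; rewrite C11 by auto; ring).
  rewrite <- rsum_scal_l. rewrite (rsum_ext N _ (fun l => sqrt alpha * (S i l * Y (2*N+l)%nat))) by (intros; rewrite C12 by auto; ring).
  ring.
Qed.


Variable Phi : R -> Mat.
Hypothesis HPhi : is_expm (3 * N) A Phi.

Definition X t k j := mmul (3 * N) (Phi t) B k j.
Definition dd t n j := rsum N (fun l => U l n * X t (0*N+l)%nat j).
Definition ww t n j := rsum N (fun l => U l n * X t (1*N+l)%nat j).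
Definition vv t n j := rsum N (fun l => U l n * X t (2*N+l)%nat j).

Lemma D_scal_r (f : R -> R) (c t a : R) : is_derive f t a -> is_derive (fun x => f x * c) t (a * c).
Proof.
  intros H. apply (is_derive_ext (fun x => c * f x) (fun x => f x * c) t (a * c)).
  intros; apply Rmult_comm.
  eapply D_eq; [| apply D_scal; exact H]. ring.
Qed.

Lemma X_deriv t k j : (k < 3 * N)%nat -> is_derive (fun t => X t k j) t (rsum (3 * N) (fun m => A k m * X t m j)).
Proof.
  intros Hk. unfold X.
  apply (D_eq _ _ (mmul (3 * N) (mmul (3 * N) A (Phi t)) B k j)).
  - apply mmul_assoc.
  - unfold mmul at 1. apply D_rsum. intros m Hm. apply D_scal_r.
    apply (Phi_deriv (3 * N) A Phi HPhi t k m Hk Hm).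
Qed.

Lemma X0 k j : (k < 3 * N)%nat -> X 0 k j = B k j.
Proof.
  intros Hk. unfold X, mmul.
  rewrite (rsum_ext _ _ (fun m => idm k m * B m j)).
  - apply (rsum_delta_l _ _ (fun m => B m j)); auto.
  - intros m Hm. rewrite (Phi_0 (3 * N) A Phi HPhi k m Hk Hm). reflexivity.
Qed.

Lemma dd_deriv t n j : is_derive (fun t => dd t n j) t (ww t n j).
Proof.
  unfold dd. eapply D_eq; [| apply D_rsum; intros l Hl; apply D_scal; apply X_deriv; lia].
  unfold ww. apply rsum_ext. intros l Hl. rewrite AZ0 by auto. reflexivity.
Qed.

Lemma ww_deriv t n j : (n < N)%nat ->
  is_derive (fun t => ww t n j) t (- (kP / tauP) * (lam n * dd t n j) - (1 / tauP) * ww t n j).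
Proof.
  intros Hn.
  unfold ww at 1. eapply D_eq; [| apply D_rsum; intros l Hl; apply D_scal; apply X_deriv; lia].
  rewrite (rsum_ext N _ (fun l => (- (kP / tauP)) * (U l n * rsum N (fun m => L l m * X t (0*N+m)%nat j)) + (- (1 / tauP)) * (U l n * X t (1*N+l)%nat j))).
  - rewrite rsum_plus, !rsum_scal_l. rewrite modalL by auto. unfold dd, ww. ring.
  - intros l Hl. rewrite (AZ1 l (fun m => X t m j)) by auto. ring.
Qed.

Lemma vv_deriv t n j : (n < N)%nat ->
  is_derive (fun t => vv t n j) t (- (cQ / tauQ) * vv t n j - (kQ / tauQ) * (lam n * vv t n j)).
Proof.
  intros Hn.
  unfold vv at 1. eapply D_eq; [| apply D_rsum; intros l Hl; apply D_scal; apply X_deriv; lia].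
  rewrite (rsum_ext N _ (fun l => (- (cQ / tauQ)) * (U l n * X t (2*N+l)%nat j) + (- (kQ / tauQ)) * (U l n * rsum N (fun m => L l m * X t (2*N+m)%nat j)))).
  - rewrite rsum_plus, !rsum_scal_l. rewrite modalL by auto. unfold vv. ring.
  - intros l Hl. rewrite (AZ2 l (fun m => X t m j)) by auto. ring.
Qed.

Lemma dd0_0 n j : (j < N)%nat -> dd 0 n (0*N+j)%nat = 0.
Proof. intros Hj. unfold dd. apply rsum_zero'. intros l Hl. rewrite X0 by lia. rewrite B00 by auto. ring. Qed.
Lemma dd0_1 n j : (j < N)%nat -> dd 0 n (1*N+j)%nat = 0.
Proof. intros Hj. unfold dd. apply rsum_zero'. intros l Hl. rewrite X0 by lia. rewrite B01 by auto. ring. Qed.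
Lemma ww0_0 n j : (j < N)%nat -> ww 0 n (0*N+j)%nat = U j n / tauP.
Proof.
  intros Hj. unfold ww. rewrite (rsum_ext N _ (fun l => (U l n / tauP) * idm l j)).
  apply (rsum_delta_r _ _ (fun l => U l n / tauP)); auto.
  intros l Hl. rewrite X0 by lia. rewrite B10 by auto. unfold Rdiv. ring.
Qed.
Lemma ww0_1 n j : (j < N)%nat -> ww 0 n (1*N+j)%nat = 0.
Proof. intros Hj. unfold ww. apply rsum_zero'. intros l Hl. rewrite X0 by lia. rewrite B11 by auto. ring. Qed.
Lemma vv0_0 n j : (j < N)%nat -> vv 0 n (0*N+j)%nat = 0.
Proof. intros Hj. unfold vv. apply rsum_zero'. intros l Hl. rewrite X0 by lia. rewrite B20 by auto. ring. Qed.
Lemma vv0_1 n j : (j < N)%nat -> vv 0 n (1*N+j)%nat = U j n / tauQ.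
Proof.
  intros Hj. unfold vv. rewrite (rsum_ext N _ (fun l => (U l n / tauQ) * idm l j)).
  apply (rsum_delta_r _ _ (fun l => U l n / tauQ)); auto.
  intros l Hl. rewrite X0 by lia. rewrite B21 by auto. unfold Rdiv. ring.
Qed.

Lemma integrand_eq t :
  rsum (2 * N) (fun i => rsum (2 * N) (fun j => (mmul (3 * N) (mmul (3 * N) C (Phi t)) B i j) ^ 2)) =
  rsum (2 * N) (fun j => rsum N (fun n => alpha * lam n * (dd t n j ^ 2 + vv t n j ^ 2))).
Proof.
  rewrite (rsum_ext (2 * N) _ (fun i => rsum (2 * N) (fun j => (rsum (3 * N) (fun k => C i k * X t k j)) ^ 2)))
    by (intros; apply rsum_ext; intros; rewrite mmul_assoc; reflexivity).
  rewrite rsum_swap. apply rsum_ext. intros j Hj.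
  rewrite rsum2.
  rewrite (rsum_ext N _ (fun i => alpha * (rsum N (fun l => S i l * X t (0*N+l)%nat j)) ^ 2))
    by (intros; rewrite (CY0 _ (fun k => X t k j)) by auto; rewrite Rpow_mult_distr, pow2_sqrt by lra; reflexivity).
  rewrite (rsum_ext N (fun i => (rsum (3 * N) (fun k => C (1 * N + i)%nat k * X t k j)) ^ 2)
                      (fun i => alpha * (rsum N (fun l => S i l * X t (2*N+l)%nat j)) ^ 2))
    by (intros; rewrite (CY1 _ (fun k => X t k j)) by auto; rewrite Rpow_mult_distr, pow2_sqrt by lra; reflexivity).
  rewrite !rsum_scal_l. rewrite (quadS (fun l => X t (0*N+l)%nat j)), (quadS (fun l => X t (2*N+l)%nat j)).
  rewrite <- !rsum_scal_l, <- rsum_plus. apply rsum_ext. intros n Hn. unfold dd, vv. ring.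
Qed.


Lemma rsum_opp n f : rsum n (fun i => - f i) = - rsum n f.
Proof. induction n; simpl; [lra|]. rewrite IHn. ring. Qed.

Lemma lam_nonneg n : (n < N)%nat -> 0 <= lam n.
Proof. intros Hn. destruct n. rewrite Hlam0; lra. left. apply Hlampos; lia. Qed.

Definition mu n := cQ / tauQ + (kQ / tauQ) * lam n.

Lemma mu_pos n : (n < N)%nat -> 0 < mu n.
Proof.
  intros Hn. unfold mu. pose proof (lam_nonneg n Hn).
  assert (0 < cQ / tauQ) by (apply Rdiv_lt_0_compat; lra).
  assert (0 <= kQ / tauQ) by (left; apply Rdiv_lt_0_compat; lra).
  assert (0 <= kQ / tauQ * lam n) by (apply Rmult_le_pos; lra). lra.
Qed.

Definition c1 n := alpha * lam n / (2 * (1 / tauP)) + (1 / tauP) * alpha / (2 * (kP / tauP)).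
Definition c2 := alpha / (kP / tauP).
Definition c3 := alpha / (2 * (kP / tauP) * (1 / tauP)).

Definition Gd n x y := if Nat.eqb n 0 then 0 else c1 n * x ^ 2 + c2 * x * y + c3 * y ^ 2.
Definition Gv n z := alpha * lam n / (2 * mu n) * z ^ 2.
Definition G t := rsum (2 * N) (fun j => rsum N (fun n => Gd n (dd t n j) (ww t n j) + Gv n (vv t n j))).
Definition h t := rsum (2 * N) (fun j => rsum N (fun n => alpha * lam n * (dd t n j ^ 2 + vv t n j ^ 2))).

Lemma Gd_deriv t n j : (n < N)%nat ->
  is_derive (fun t => Gd n (dd t n j) (ww t n j)) t (- (alpha * lam n * dd t n j ^ 2)).
Proof.
  intros Hn. unfold Gd. destruct (Nat.eqb n 0) eqn:E.
  - apply Nat.eqb_eq in E; subst. rewrite Hlam0. eapply D_eq; [|apply D_const]. ring.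
  - pose proof (D_scal (c1 n) _ t _ (D_sq (fun t => dd t n j) t _ (dd_deriv t n j))) as H1.
    pose proof (D_mult (fun t => c2 * dd t n j) (fun t => ww t n j) t _ _
                  (D_scal c2 (fun t => dd t n j) t _ (dd_deriv t n j)) (ww_deriv t n j Hn)) as H2.
    pose proof (D_scal c3 _ t _ (D_sq (fun t => ww t n j) t _ (ww_deriv t n j Hn))) as H3.
    pose proof (D_plus _ _ t _ _ (D_plus _ _ t _ _ H1 H2) H3) as H4. simpl in H4.
    eapply D_eq; [| exact H4]. unfold c1, c2, c3. field. lra.
Qed.

Lemma Gv_deriv t n j : (n < N)%nat ->
  is_derive (fun t => Gv n (vv t n j)) t (- (alpha * lam n * vv t n j ^ 2)).
Proof.
  intros Hn. unfold Gv.
  pose proof (D_scal (alpha * lam n / (2 * mu n)) _ t _ (D_sq (fun t => vv t n j) t _ (vv_deriv t n j Hn))) as H1.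
  eapply D_eq; [| exact H1]. pose proof (mu_pos n Hn). unfold mu in *. field. split; [lra|]. pose proof (lam_nonneg n Hn). nra.
Qed.

Lemma G_deriv t : is_derive G t (- h t).
Proof.
  unfold G.
  eapply D_eq; [| apply D_rsum; intros j Hj; apply D_rsum; intros n Hn; apply D_plus;
                  [apply Gd_deriv; auto | apply Gv_deriv; auto]].
  unfold h. rewrite <- rsum_opp. apply rsum_ext. intros j Hj. rewrite <- rsum_opp.
  apply rsum_ext. intros n Hn. ring.
Qed.

Lemma h_cont t : continuous h t.
Proof.
  unfold h. apply C_rsum. intros j Hj. apply C_rsum. intros n Hn.
  apply (C_der _ t _ (D_scal (alpha * lam n) _ t _ (D_plus _ _ t _ _
     (D_sq (fun t => dd t n j) t _ (dd_deriv t n j)) (D_sq (fun t => vv t n j) t _ (vv_deriv t n j Hn))))).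
Qed.

Lemma G_tends0 : tends0 G.
Proof.
  unfold G. apply tends0_rsum. intros j Hj. apply tends0_rsum. intros n Hn.
  apply (tends0_plus (fun t => Gd n (dd t n j) (ww t n j)) (fun t => Gv n (vv t n j))).
  - destruct (Nat.eqb n 0) eqn:E.
    + apply (tends0_ext (fun _ => 0)). intros t. unfold Gd. rewrite E. reflexivity. apply tends0_const0.
    + apply (tends0_bound (fun t => dd t n j ^ 2 + ww t n j ^ 2) _ (Rabs (c1 n) + Rabs c2 + Rabs c3)).
      { pose proof (Rabs_pos (c1 n)). pose proof (Rabs_pos c2). pose proof (Rabs_pos c3). lra. }
      { intros t Ht. unfold Gd. rewrite E.
        rewrite (Rabs_right (dd t n j ^ 2 + ww t n j ^ 2))
          by (pose proof (pow2_ge_0 (dd t n j)); pose proof (pow2_ge_0 (ww t n j)); lra).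
        apply quad_bound. }
      apply Nat.eqb_neq in E.
      apply (osc_tends0 (kP / tauP) (1 / tauP) (lam n)).
      * apply Rdiv_lt_0_compat; lra.
      * apply Rdiv_lt_0_compat; lra.
      * apply Hlampos; lia.
      * intros; apply dd_deriv.
      * intros t. eapply D_eq; [| apply ww_deriv; auto]. ring.
  - apply (tends0_bound (fun t => vv t n j ^ 2) _ (Rabs (alpha * lam n / (2 * mu n)))).
    apply Rabs_pos.
    { intros t Ht. unfold Gv. rewrite Rabs_mult. right. reflexivity. }
    apply (decay_tends0 (mu n)). apply mu_pos; auto.
    intros t. eapply D_eq; [| apply vv_deriv; auto]. unfold mu. ring.
Qed.

Lemma rsum_ifz c m : rsum m (fun n => if Nat.eqb n 0 then 0 else c) = c * INR (m - 1).
Proof.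
  induction m as [|m IH].
  - simpl. ring.
  - cbn [rsum]. rewrite IH. destruct m as [|m].
    + cbn. ring.
    + assert (E : Nat.eqb (Datatypes.S m) 0 = false) by reflexivity. rewrite E.
      replace (Datatypes.S m - 1)%nat with m by lia. replace (Datatypes.S (Datatypes.S m) - 1)%nat with (Datatypes.S m) by lia.
      rewrite S_INR. ring.
Qed.

Lemma Ucol n : (n < N)%nat -> rsum N (fun j => U j n ^ 2) = 1.
Proof.
  intros Hn. rewrite (rsum_ext N _ (fun k => U k n * U k n)) by (intros; ring).
  rewrite HUorth by auto. unfold idm. rewrite Nat.eqb_refl. reflexivity.
Qed.

Lemma G0_val : G 0 = alpha / (2 * kP) * INR (N - 1)
     + alpha / (2 * tauQ) * rsum N (fun n => if Nat.eqb n 0 then 0 else 1 / (cQ / lam n + kQ)).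
Proof.
  unfold G. rewrite rsum2.
  rewrite (rsum_ext N (fun l => rsum N (fun n => Gd n (dd 0 n (0 * N + l)%nat) (ww 0 n (0 * N + l)%nat) + Gv n (vv 0 n (0 * N + l)%nat)))
             (fun l => rsum N (fun n => Gd n 0 (U l n / tauP) + Gv n 0)))
    by (intros; apply rsum_ext; intros; rewrite dd0_0, ww0_0, vv0_0 by auto; reflexivity).
  rewrite (rsum_ext N (fun l => rsum N (fun n => Gd n (dd 0 n (1 * N + l)%nat) (ww 0 n (1 * N + l)%nat) + Gv n (vv 0 n (1 * N + l)%nat)))
             (fun l => rsum N (fun n => Gd n 0 0 + Gv n (U l n / tauQ))))
    by (intros; apply rsum_ext; intros; rewrite dd0_1, ww0_1, vv0_1 by auto; reflexivity).
  rewrite (rsum_swap N N (fun l n => Gd n 0 (U l n / tauP) + Gv n 0)).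
  rewrite (rsum_swap N N (fun l n => Gd n 0 0 + Gv n (U l n / tauQ))).
  rewrite (rsum_ext N _ (fun n => if Nat.eqb n 0 then 0 else alpha / (2 * kP))).
  2:{ intros n Hn. unfold Gd, Gv. destruct (Nat.eqb n 0) eqn:E.
      - rewrite rsum_zero'. reflexivity. intros; ring.
      - rewrite (rsum_ext N _ (fun l => (c3 / tauP ^ 2) * U l n ^ 2)) by (intros; cbv beta iota; field; pose proof (mu_pos n Hn); repeat split; lra).
        rewrite rsum_scal_l, Ucol by auto. unfold c3. field. lra. }
  rewrite rsum_ifz.
  rewrite (rsum_ext N _ (fun n => alpha / (2 * tauQ) * (if Nat.eqb n 0 then 0 else 1 / (cQ / lam n + kQ)))).
  2:{ intros n Hn. unfold Gd, Gv. destruct (Nat.eqb n 0) eqn:E.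
      - apply Nat.eqb_eq in E. subst. rewrite Hlam0. rewrite rsum_zero'. ring. intros; unfold Rdiv; ring.
      - apply Nat.eqb_neq in E. pose proof (Hlampos n ltac:(lia) Hn) as Hln.
        rewrite (rsum_ext N _ (fun l => (alpha * lam n / (2 * mu n) / tauQ ^ 2) * U l n ^ 2)) by (intros; cbv beta iota; field; pose proof (mu_pos n Hn); repeat split; lra).
        rewrite rsum_scal_l, Ucol by auto. unfold mu.
        assert (0 < cQ / lam n + kQ).
        { assert (0 < cQ / lam n) by (apply Rdiv_lt_0_compat; lra). lra. }
        pose proof (Rmult_lt_0_compat kQ (lam n) HkQ Hln).
        field. repeat split; lra. }
  rewrite rsum_scal_l. ring.
Qed.

Lemma main_H2 :
  improper_int0 (fun t => rsum (2 * N) (fun i => rsum (2 * N) (fun j => (mmul (3 * N) (mmul (3 * N) C (Phi t)) B i j) ^ 2)))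
    (alpha / (2 * kP) * INR (N - 1)
     + alpha / (2 * tauQ) * rsum N (fun n => if Nat.eqb n 0 then 0 else 1 / (cQ / lam n + kQ))).
Proof.
  rewrite <- G0_val.
  replace (fun t => rsum (2 * N) (fun i => rsum (2 * N) (fun j => (mmul (3 * N) (mmul (3 * N) C (Phi t)) B i j) ^ 2)))
    with h by (apply functional_extensionality; intros t; rewrite integrand_eq; reflexivity).
  apply improper_from_primitive.
  - apply G_deriv.
  - apply h_cont.
  - apply G_tends0.
Qed.

End Main.


Module Bridge.
From mathcomp Require Import all_boot all_algebra.
From mathcomp Require Import Rstruct.
Local Open Scope ring_scope.
Lemma rsum_big n (f : nat -> R) : rsum n f = (\sum_(i < n) f i)%R.
Proof.
elim: n => [|n IH] /=; first by rewrite big_ord0.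
by rewrite big_ord_recr /= IH.
Qed.
Lemma idm_ord N (p q : 'I_N) : idm p q = (p == q)%:R.
Proof.
rewrite /idm. case: (eqVneq p q) => [->|ne]; first by rewrite Nat.eqb_refl.
have : (nat_of_ord p <> nat_of_ord q) by move=> e; move/eqP: ne; apply; apply: ord_inj.
by move/Nat.eqb_neq => ->.
Qed.
Lemma orth_sym N (U : Mat) :
  (forall i j, lt i N -> lt j N -> rsum N (fun k => Rmult (U k i) (U k j)) = idm i j) ->
  forall i j, lt i N -> lt j N -> rsum N (fun k => Rmult (U i k) (U j k)) = idm i j.
Proof.
move=> H i j Hi Hj.
pose M := (\matrix_(i, j) U (nat_of_ord i) (nat_of_ord j) : 'M[R]_N).
have H1 : (M^T *m M = 1%:M).
  apply/matrixP => p q; rewrite /M !mxE.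
  rewrite -idm_ord -(H p q (ltP (ltn_ord p)) (ltP (ltn_ord q))) rsum_big.
  by apply: eq_bigr => k _; rewrite !mxE.
have H2 := mulmx1C H1.
move/ltP: Hi => Hi; move/ltP: Hj => Hj.
have := congr1 (fun A : 'M[R]_N => A (Ordinal Hi) (Ordinal Hj)) H2.
rewrite /= !mxE -idm_ord /= => <-.
rewrite rsum_big; apply: eq_bigr => k _; rewrite !mxE //.
Qed.
End Bridge.

Global Set Bullet Behavior "Strict Subproofs".

Theorem theorem2
  (N : nat) (w : Mat) (U : Mat) (lam : nat -> R) (S : Mat)
  (kP tauP kQ tauQ bbar alpha : R)
  (HN : (1 <= N)%nat)
  (Hw_sym : forall i j, (i < N)%nat -> (j < N)%nat -> w i j = w j i)
  (Hw_nonneg : forall i j, (i < N)%nat -> (j < N)%nat -> 0 <= w i j)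
  (Hconn : connected N w)
  (Heig : eigen_decomp N (laplacian N w) U lam)
  (Hlam0 : lam 0%nat = 0)
  (Hlam1 : (2 <= N)%nat -> 0 < lam 1%nat)
  (Hlam_sorted : forall n, (n + 1 < N)%nat -> lam n <= lam (n + 1)%nat)
  (HS : is_psd_sqrt N (laplacian N w) S)
  (HkP : 0 < kP) (HtauP : 0 < tauP) (HkQ : 0 < kQ) (HtauQ : 0 < tauQ)
  (Hbbar : 0 <= bbar) (Halpha : 0 < alpha) :
  let cQ := 1 + 2 * kQ * bbar in
  H2_norm_sq (3 * N) (2 * N) (2 * N)
    (sysA N (laplacian N w) kP tauP kQ tauQ cQ)
    (sysB N tauP tauQ)
    (sysC N S alpha)
    (alpha / (2 * kP) * INR (N - 1)
     + alpha / (2 * tauQ)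
       * rsum N (fun n => if Nat.eqb n 0 then 0 else 1 / (cQ / lam n + kQ))).
Proof.
  intros cQ. unfold H2_norm_sq. intros Phi HPhi.
  destruct Heig as [HUorth HUeig]. destruct HS as [HSsym [_ HSS]].
  assert (HLsym : forall i j, (i < N)%nat -> (j < N)%nat -> laplacian N w i j = laplacian N w j i).
  { intros i j Hi Hj. unfold laplacian. destruct (Nat.eqb i j) eqn:E.
    - apply Nat.eqb_eq in E. subst. rewrite Nat.eqb_refl. reflexivity.
    - assert (E2 : Nat.eqb j i = false) by (rewrite Nat.eqb_sym; exact E).
      rewrite E2. rewrite Hw_sym by auto. reflexivity. }
  assert (Hlampos : forall n, (0 < n)%nat -> (n < N)%nat -> 0 < lam n).
  { intros n Hn HnN. assert (H1 : 0 < lam 1%nat) by (apply Hlam1; lia).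
    induction n as [|n IH]; [lia|].
    destruct n as [|n]; [exact H1|].
    pose proof (Hlam_sorted (Datatypes.S n) ltac:(lia)) as Hs.
    replace (Datatypes.S n + 1)%nat with (Datatypes.S (Datatypes.S n)) in Hs by lia.
    specialize (IH ltac:(lia) ltac:(lia)). lra. }
  assert (HcQ : 0 < cQ).
  { unfold cQ. assert (0 <= kQ * bbar) by (apply Rmult_le_pos; lra). lra. }
  apply (main_H2 N (laplacian N w) U S lam kP tauP kQ tauQ cQ alpha HLsym HUorth
           (Bridge.orth_sym N U HUorth) HUeig Hlam0 Hlampos HSsym HSS HkP HtauP HkQ HtauQ HcQ Halpha Phi HPhi).
Qed.
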